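(* Let $G$ be a finite group. (1) Write $G/G'=\{g_0G',\ldots,g_kG'\}$ with the cosets pairwise distinct. Then for each $i\in[0,k]$ there exists $S_i\in\mathcal F(G)$ with $\pi(S_i)=g_iG'$. For any such choice of $S_0,\dots,S_k$, the set $\mathcal C=\{[S_i]:i\in[0,k]\}$ is a subgroup of $\mathcal C(\mathcal B(G),\mathcal F(G))$ and the map $G/G'\to\mathcal C$, $g_iG'\mapsto[S_i]$, is a group isomorphism (so the class semigroup contains a subgroup isomorphic to $G/G'$, the class group of the complete integral closure of $\mathcal B(G)$). Moreover, $[S\boldsymbol{\cdot}S_i]\in\mathcal C$ for every $i\in[0,k]$ and every $S\in\mathcal F(G)$. (2) The map $\mathsf Z(G)\to\mathcal C(\mathcal B(G),\mathcal F(G))^\times$, $g\mapsto[g]$, is a group isomorphism onto the group of invertible elements of the class semigroup.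
   Context: Let $G$ be a finite group written multiplicatively with identity $1_G$; $G'$ is its commutator subgroup and $\mathsf Z(G)$ its center. $\mathcal F(G)$ is the free abelian monoid with basis $G$; its elements are sequences $S=g_1\boldsymbol{\cdot}\ldots\boldsymbol{\cdot}g_\ell$ (operation $\boldsymbol{\cdot}$ = concatenation, identity the empty sequence $1_{\mathcal F(G)}$; an element $g\in G$ is also viewed as a one-term sequence). $\pi(S)=\{g_{\tau(1)}\cdots g_{\tau(\ell)}:\tau\text{ a permutation of }[1,\ell]\}$, $\pi(1_{\mathcal F(G)})=\{1_G\}$, and $\mathcal B(G)=\{S\in\mathcal F(G):1_G\in\pi(S)\}$. For $S,S'\in\mathcal F(G)$, $S\sim S'$ means: for all $T\in\mathcal F(G)$, $S\boldsymbol{\cdot}T\in\mathcal B(G)\iff S'\boldsymbol{\cdot}T\in\mathcal B(G)$; this is a congruence, $[S]$ is the class of $S$, and the class semigroup $\mathcal C(\mathcal B(G),\mathcal F(G))$ is the set of classes, written additively with $[S]+[T]=[S\boldsymbol{\cdot}T]$ and zero $[1_{\mathcal F(G)}]$. *)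

(* Defs.v *)
From mathcomp Require Import all_boot all_fingroup all_solvable.
Set Implicit Arguments. Unset Strict Implicit. Unset Printing Implicit Defensive.
Import GroupScope.

Section ClassSemigroup.
Variable gT : finGroupType.

(* A sequence S in F(G) (free abelian monoid over G) is represented by a list;
   all notions below are invariant under permutation of the list. *)

Definition piS (S : seq gT) : {set gT} :=
  [set g | has (fun t => \prod_(x <- t) x == g) (permutations S)].

Definition inB (S : seq gT) : bool := 1 \in piS S.

(* S ~ S' : for all T, S.T in B(G) iff S'.T in B(G).  Equality of classes
   [S] = [S'] in the class semigroup C(B(G),F(G)); [S]+[T] = [S.T] and the
   zero is [1_F] = [::]. *)
Definition simB (S S' : seq gT) : Prop :=
  forall T : seq gT, inB (S ++ T) = inB (S' ++ T).

Definition class_unit (S : seq gT) : Prop :=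
  exists T : seq gT, simB (S ++ T) [::].
End ClassSemigroup.

(* Main.v *)
Require Import Defs.
From mathcomp Require Import all_boot all_fingroup all_solvable zify.
Import GroupScope.
Set Implicit Arguments. Unset Strict Implicit. Unset Printing Implicit Defensive.

Section Gen.
Variable gT : finGroupType.
Definition prodl (u : seq gT) := \prod_(x <- u) x.

Lemma prodl_nil : prodl [::] = 1.
Proof. by rewrite /prodl big_nil. Qed.

Lemma prodl_cons x u : prodl (x :: u) = x * prodl u.
Proof. by rewrite /prodl big_cons. Qed.

Lemma prodl_cat u v : prodl (u ++ v) = prodl u * prodl v.
Proof. by rewrite /prodl big_cat. Qed.

Lemma prod_rem x v : (forall y, commute x y) -> x \in v ->
  prodl v = x * prodl (rem x v).
Proof.
move=> cx; elim: v => // y v IH; rewrite inE /=.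
case: (eqVneq y x) => [-> _ | nyx]; first by rewrite prodl_cons.
move=> xv.
by rewrite !prodl_cons IH // !mulgA; congr (_ * _); exact: (esym (cx y)).
Qed.

Lemma perm_prod_comm (u v : seq gT) : (forall a b : gT, commute a b) ->
  perm_eq u v -> prodl u = prodl v.
Proof.
move=> cm; elim: u v => [|x u IH] v puv.
  by rewrite perm_sym in puv; move/perm_nilP: puv => ->.
have xv : x \in v by rewrite -(perm_mem puv) inE eqxx.
rewrite (prod_rem (cm x) xv) prodl_cons (IH (rem x v)) //.
by rewrite -(perm_cons x) (perm_trans puv) // perm_to_rem.
Qed.

End Gen.

Section Aux.
Variable gT : finGroupType.
Implicit Types (S T U : seq gT) (g h : gT).


Lemma piP S g : reflect (exists2 u, perm_eq u S & prodl u = g) (g \in piS S).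
Proof.
rewrite /piS inE; apply: (iffP hasP) => [[u] | [u]].
  by rewrite mem_permutations => pu /eqP <-; exists u.
by move=> pu <-; exists u; rewrite ?mem_permutations.
Qed.

Lemma piS_perm S S' : perm_eq S S' -> piS S = piS S'.
Proof.
move=> pS; apply/setP => g; apply/piP/piP => [] [u pu <-]; exists u => //.
  by rewrite (perm_trans pu).
by rewrite (perm_trans pu) // perm_sym.
Qed.

Lemma piS_self S : prodl S \in piS S.
Proof. by apply/piP; exists S. Qed.




Lemma piS_cat S T a b : a \in piS S -> b \in piS T -> a * b \in piS (S ++ T).
Proof.
move=> /piP [u pu <-] /piP [v pv <-]; apply/piP; exists (u ++ v).
  exact: perm_cat. by rewrite prodl_cat.
Qed.

Lemma piS_nil g : (g \in piS [::]) = (g == 1).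
Proof.
apply/piP/eqP => [[u /perm_nilP -> <-] | ->]; first by rewrite prodl_nil.
by exists [::]; rewrite ?prodl_nil.
Qed.

Lemma pi_central g T h : g \in 'Z([set: gT]) ->
  (h \in piS (g :: T)) = (g^-1 * h \in piS T).
Proof.
move=> /centerP [_ cg].
have cx : forall y, commute g y by move=> y; have := cg y (in_setT y); rewrite /commute => ->.
apply/piP/piP => [[u pu <-] | [u pu hu]].
  have gu : g \in u by rewrite (perm_mem pu) inE eqxx.
  exists (rem g u); last by rewrite (prod_rem cx gu) mulKg.
  rewrite -(perm_cons g); apply: perm_trans _ pu; rewrite perm_sym; exact: perm_to_rem.
exists (g :: u); first by rewrite perm_cons.
by rewrite prodl_cons hu mulKVg.
Qed.


Notation D := ([set: gT]^`(1))%G.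
Notation q := (coset D).

Lemma normD x : x \in 'N(D).
Proof. exact: subsetP (normal_norm (der_normal 1 [set: gT]%G)) _ (in_setT x). Qed.

Lemma qM a b : q (a * b) = q a * q b.
Proof. exact: coset_morphM (normD a) (normD b). Qed.

Lemma commD a b : [~ a, b] \in D.
Proof. by rewrite /= derg1 mem_commg ?inE. Qed.

Lemma qC a b : commute (q a) (q b).
Proof. by unfold commute; rewrite -!qM (commgC a b) (coset_kerr _ (commD a b)). Qed.

Lemma q1 : q 1 = 1.
Proof. exact: coset_id (group1 _). Qed.

Lemma q_prodl u : q (prodl u) = prodl (map q u).
Proof.
elim: u => [|x u IH]; first by rewrite /= !prodl_nil q1.
by rewrite /= !prodl_cons qM IH.
Qed.

Lemma qC_all (a b : coset_of D) : commute a b.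
Proof.
by case: (cosetP a) => x _ ->; case: (cosetP b) => y _ ->; apply: qC.
Qed.

Lemma q_perm u v : perm_eq u v -> q (prodl u) = q (prodl v).
Proof.
by move=> puv; rewrite !q_prodl; apply: perm_prod_comm qC_all _; apply: perm_map.
Qed.

Lemma piS_q S h : h \in piS S -> q h = q (prodl S).
Proof. by move=> /piP [u pu <-]; apply: q_perm. Qed.

Definition full S := forall h, q h = q (prodl S) -> h \in piS S.

Lemma full_catl S T : full S -> full (S ++ T).
Proof.
move=> fS h; rewrite prodl_cat qM => hq.
have -> : h = (h * (prodl T)^-1) * prodl T by rewrite mulgKV.
apply: piS_cat (piS_self _); apply: fS.
by rewrite qM hq -mulgA -qM mulgV q1 mulg1.
Qed.

Lemma full_catr S T : full S -> full (T ++ S).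
Proof.
move=> fS h hq; rewrite (piS_perm (_ : perm_eq (T ++ S) (S ++ T))); last by rewrite perm_catC.
apply: full_catl => //.
by rewrite hq; apply: q_perm; rewrite perm_catC.
Qed.

Lemma inB_full S : full S -> inB S = (q (prodl S) == 1).
Proof.
move=> fS; rewrite /inB; apply/idP/eqP => [/piS_q <- | h]; first exact: q1.
by apply: fS; rewrite h q1.
Qed.

Lemma sim_full S S' : full S -> full S' -> q (prodl S) = q (prodl S') -> simB S S'.
Proof.
move=> fS fS2 e T.
by rewrite (inB_full (full_catl (T:=T) fS)) (inB_full (full_catl (T:=T) fS2)) !prodl_cat !qM e.
Qed.

Lemma memq h (x : coset_of D) : (h \in (x : {set gT})) = (q h == x).
Proof.
apply/idP/eqP => [/coset_mem // | <-].
by rewrite val_coset ?normD // rcoset_refl.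
Qed.


Lemma commR (a b : gT) : exists R, 1 \in piS R /\ [~ a, b] \in piS R.
Proof.
exists [:: a^-1; b^-1; a; b]; split.
  apply/piP; exists [:: a; a^-1; b; b^-1].
    by apply/seq.permP => p /=; lia.
  by rewrite /prodl !big_cons big_nil mulg1 mulKVg mulgV.
apply/piP; exists [:: a^-1; b^-1; a; b] => //.
by rewrite /prodl !big_cons big_nil mulg1 /commg /conjg !mulgA.
Qed.

Lemma gen_prod n (c : 'I_n -> gT) :
  (forall i, exists R, 1 \in piS R /\ c i \in piS R) ->
  exists R, 1 \in piS R /\ \prod_i c i \in piS R.
Proof.
elim: n c => [|n IH] c hc.
  by exists [::]; rewrite big_ord0 piS_nil eqxx.
have [R1 [h1 h2]] := IH (fun i => c (widen_ord (leqnSn n) i)) (fun i => hc _).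
have [R2 [h3 h4]] := hc ord_max.
exists (R1 ++ R2); split; first by rewrite -(mulg1 1) piS_cat.
by rewrite big_ord_recr piS_cat.
Qed.

Lemma inD (z : gT) : z \in D -> exists R, 1 \in piS R /\ z \in piS R.
Proof.
rewrite /= derg1 => /gen_prodgP [n [c hc ->]]; apply: gen_prod => i.
by case/imset2P: (hc i) => a b _ _ ->; apply: commR.
Qed.

Lemma inD_list (zs : seq gT) : {subset zs <= D} ->
  exists R, 1 \in piS R /\ {subset zs <= piS R}.
Proof.
elim: zs => [|z zs IH] hz; first by exists [::]; rewrite piS_nil.
have [R1 [h1 h2]] := IH (fun w hw => hz w (@mem_behead _ (z :: zs) w hw)).
have [R2 [h3 h4]] := inD (hz z (mem_head _ _)).
exists (R1 ++ R2); split; first by rewrite -(mulg1 1) piS_cat.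
move=> w; rewrite inE => /orP [/eqP -> | /h2 hw].
  by rewrite -(mul1g z) piS_cat.
by rewrite -(mulg1 w) piS_cat.
Qed.

Lemma exists_S (x : coset_of D) : exists S, piS S = x.
Proof.
case: (cosetP x) => g _ ->.
have [R [h1 h2]] : exists R, 1 \in piS R /\ {subset enum D <= piS R}.
  by apply: inD_list => z; rewrite mem_enum.
exists (g :: R); apply/setP => h; rewrite memq.
apply/idP/eqP => [/piS_q -> | hq].
  by rewrite prodl_cons qM -(piS_q h1) q1 mulg1.
have [z zD ->] := kercoset_rcoset (normD h) (normD g) hq.
rewrite (piS_perm (_ : perm_eq (g :: R) (R ++ [:: g]))); last first.
  by rewrite -cat1s perm_catC.
apply: piS_cat; first by apply: h2; rewrite mem_enum.
by apply/piP; exists [:: g]; rewrite // prodl_cons prodl_nil mulg1.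
Qed.


Notation Z := ('Z([set: gT])).

Lemma pi_central_list S U h : {subset S <= Z} ->
  (h \in piS (S ++ U)) = ((prodl S)^-1 * h \in piS U).
Proof.
elim: S h => [|s S IH] h hS /=; first by rewrite prodl_nil invg1 mul1g.
rewrite pi_central ?(hS s (mem_head _ _)) // IH.
  by rewrite prodl_cons invMg mulgA.
by move=> w hw; apply: hS; rewrite inE hw orbT.
Qed.

Lemma swap1 (a b : gT) : a * b = 1 -> b * a = 1.
Proof.
move=> e; have -> : b = a^-1 by rewrite -[b](mulKg a) e mulg1.
exact: mulVg.
Qed.

Lemma perm2 (u : seq gT) x y : perm_eq u [:: x; y] -> u = [:: x; y] \/ u = [:: y; x].
Proof.
move=> pu; have := perm_size pu.
case: u pu => [|a [|b [|c l]]] // pu _.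
case: (eqVneq a x) => [eax | nax].
  rewrite eax perm_cons in pu; left; rewrite eax (perm_small_eq _ pu) //.
have : a \in [:: x; y] by rewrite -(perm_mem pu) mem_head.
rewrite !inE (negPf nax) /= => /eqP eay; right.
have pu2 : perm_eq [:: a; b] [:: y; x].
  by apply: perm_trans pu _; apply/seq.permP => p /=; lia.
by rewrite eay perm_cons in pu2; rewrite eay (perm_small_eq _ pu2).
Qed.

Lemma unit_central S T w : simB (S ++ T) [::] -> w \in S ++ T -> w \in Z.
Proof.
move=> ST wW; apply/centerP; split; first exact: in_setT.
move=> x _; have h0 := ST [::]; rewrite /inB cats0 /= piS_nil eqxx in h0.
case/piP: h0 => u pu u1.
have wu : w \in u by rewrite (perm_mem pu).
case/splitPr: wu pu u1 => [u1 u2] pu u1e.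
have wr : w * prodl (u2 ++ u1) = 1.
  have : prodl (w :: u2) * prodl u1 = 1 by apply: swap1; rewrite -prodl_cat.
  by rewrite prodl_cons -mulgA -prodl_cat.
have rw : prodl (u2 ++ u1) = w^-1 by rewrite -[prodl _](mulKg w) wr mulg1.
pose y := w * (x^-1 * w^-1).
have e2 := ST [:: x; y].
have : inB ((S ++ T) ++ [:: x; y]).
  apply/piP; exists (w :: x :: (u2 ++ u1) ++ [:: y]).
    apply: perm_trans (perm_cat pu (perm_refl _)).
    by apply/seq.permP => p; rewrite /= !count_cat /=; lia.
  by rewrite !prodl_cons prodl_cat rw prodl_cons prodl_nil mulg1 /y mulKg mulKVg mulgV.
rewrite e2 /inB /= => /piP [v /perm2 [->|->]] /=.
  rewrite !prodl_cons prodl_nil mulg1 /y => e.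
  unfold commute; apply/eqP; first [by rewrite eq_mulgV1 invMg -mulgA e | by rewrite eq_sym eq_mulgV1 invMg -mulgA e].
rewrite !prodl_cons prodl_nil mulg1 /y => /swap1 e.
unfold commute; apply/eqP; first [by rewrite eq_mulgV1 invMg -mulgA e | by rewrite eq_sym eq_mulgV1 invMg -mulgA e].
Qed.

End Aux.

Theorem theorem3p8 (gT : finGroupType) :
  (* (1) *)
  ((forall x : coset_of [set: gT]^`(1), exists S : seq gT, piS S = x) /\
   (forall Sx : coset_of [set: gT]^`(1) -> seq gT,
      (forall x, piS (Sx x) = x) ->
      (* the map gG' |-> [S_g] is a homomorphism ... *)
      (forall x y, simB (Sx x ++ Sx y) (Sx (x * y))) /\
      (* ... which is injective, so a group isomorphism onto C = {[S_x]} *)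
      (forall x y, simB (Sx x) (Sx y) -> x = y) /\
      (* [S . S_i] lies in C *)
      (forall (S : seq gT) x, exists y, simB (S ++ Sx x) (Sx y))))
  /\
  (* (2) g |-> [g] is a group isomorphism Z(G) -> C(B(G),F(G))^x *)
  ((forall g, g \in 'Z([set: gT]) -> class_unit [:: g]) /\
   (forall g h, g \in 'Z([set: gT]) -> h \in 'Z([set: gT]) ->
      simB [:: g * h] ([:: g] ++ [:: h])) /\
   (forall g h, g \in 'Z([set: gT]) -> h \in 'Z([set: gT]) ->
      simB [:: g] [:: h] -> g = h) /\
   (forall S : seq gT, class_unit S ->
      exists2 g, g \in 'Z([set: gT]) & simB S [:: g])).
Proof.
split.
  split; first exact: exists_S.
  move=> Sx HS.
  have qx : forall x, coset [set: gT]^`(1) (prodl (Sx x)) = x.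
    by move=> x; apply/eqP; rewrite -memq -HS piS_self.
  have fx : forall x, full (Sx x).
    by move=> x h hq; rewrite HS memq hq qx.
  split; [|split].
  - move=> x y; apply: sim_full; [exact: full_catl | exact: fx |].
    by rewrite prodl_cat qM !qx.
  - move=> x y e; have := e [:: (prodl (Sx x))^-1].
    rewrite (inB_full (full_catl (T:=[:: (prodl (Sx x))^-1]) (fx x))) (inB_full (full_catl (T:=[:: (prodl (Sx x))^-1]) (fx y))).
    rewrite !prodl_cat !qM !qx.
    have ex : x * coset [set: gT]^`(1) (prodl [:: (prodl (Sx x))^-1]) = 1.
      by rewrite prodl_cons prodl_nil mulg1 -{1}(qx x) -qM mulgV q1.
    by rewrite ex eqxx => /esym/eqP; rewrite -ex => /mulIg.
  - move=> S x; exists (coset [set: gT]^`(1) (prodl S) * x).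
    apply: sim_full; [exact: full_catr | exact: fx |].
    by rewrite prodl_cat qM qx.
split; [|split; [|split]].
- move=> g gZ; exists [:: g^-1] => T.
  rewrite /inB /= pi_central // pi_central ?groupV // invgK mulg1 mulgV.
  by [].
- move=> g h gZ hZ T; rewrite /inB /= !pi_central ?groupM //.
  by rewrite invMg !mulg1.
- move=> g h gZ hZ e; have := e [:: g^-1].
  rewrite /inB /= !pi_central ?groupV // !piS_nil invgK mulg1 mulgV eqxx.
  by rewrite mulg1 -eq_mulgV1 => /esym/eqP.
- move=> S [T ST].
  have SZ : {subset S <= 'Z([set: gT])}.
    by move=> w wS; apply: (unit_central ST); rewrite mem_cat wS.
  exists (prodl S); first by rewrite /prodl big_seq; apply: group_prod => w wS; exact: SZ.
  move=> U; rewrite /inB pi_central_list // /= pi_central //.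
  by rewrite /prodl big_seq; apply: group_prod => w wS; exact: SZ.
Qed.
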